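(* If $L$ is a $k$-flat of $I(\mathfrak{gl}_n,V\oplus\bigwedge^2)$, then $\{(a,b)\in\mathbb{E}^\ast_n:\vec v(a,b)\in L\}$ is a $k$-ensemble.
   Context: Identify the diagonal Cartan subalgebra of $\mathfrak{gl}_n$ with $\mathbb{R}^n$ with coordinates $x_1,\dots,x_n$, and let $W=\{x_1\ge\cdots\ge x_n\}$. For $1\le i\le j\le n$ let $\lambda_{i,j}^\perp$ be the hyperplane $x_i+x_j=0$ (for $i=j$: $x_i=0$); $I(\mathfrak{gl}_n,V\oplus\bigwedge^2)$ is the arrangement of these hyperplanes restricted to $W$. A flat is a set $W\cap\bigcap_{(i,j)\in T}\lambda_{i,j}^\perp$ for a (possibly empty) set $T$ of pairs $i\le j$; a $k$-flat is one whose linear span has dimension $k$. Let $\vec v(a,b)\in\mathbb{R}^n$ have $a$ ones, then $n-a-b$ zeros, then $b$ minus-ones. Order $\mathbb{N}^2$ by $(a,b)\le(c,d)\iff a\le c, b\le d$, with level $\ell(a,b)=a+b$. Let $\mathbb{E}_n=\{P\in\mathbb{N}^2:\ell(P)\le n\}$, $\mathbb{E}^\ast_n=\mathbb{E}_n\setminus\{(0,0)\}$, $\widehat{\mathbb{E}}_n=\mathbb{E}_n\sqcup\{\infty\}$ with $\infty$ the maximum; intervals $[A,B]$ are taken in $\widehat{\mathbb{E}}_n$. An ensemble is a set $\left(\bigcup_{0\le i\le m}[A_i,B_i]\right)\cap\mathbb{E}^\ast_n$ with $A_i,B_i\in\widehat{\mathbb{E}}_n$ such that (1) $A_0=(0,0)$;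 (2) $A_i\le B_i$; (3) $B_i+(1,1)\le A_{i+1}$ for $0\le i\le m-1$; (4) $\ell(B_m)<n$ or $B_m=\infty$. It is a $k$-ensemble if its elements have exactly $k$ distinct levels. *)

(* Defs.v *)
From HB Require Import structures.
From mathcomp Require Import all_boot all_order all_algebra.
From mathcomp Require Import reals.
Set Implicit Arguments. Unset Strict Implicit. Unset Printing Implicit Defensive.
Import Order.TTheory GRing.Theory Num.Theory.
Local Open Scope ring_scope.

(* Coordinates x_1..x_n of the paper are the entries x 0 i, i : 'I_n
   (0-based indices). *)

Definition inW (R : realType) (n : nat) (x : 'rV[R]_n) : Prop :=
  forall i j : 'I_n, (i <= j)%N -> x 0 j <= x 0 i.

Definition on_hyp (R : realType) (n : nat) (i j : 'I_n) (x : 'rV[R]_n) : Prop :=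
  if i == j then x 0 i = 0 else x 0 i + x 0 j = 0.

Definition flat_of (R : realType) (n : nat) (T : {set 'I_n * 'I_n})
  (x : 'rV[R]_n) : Prop :=
  inW x /\ forall p, p \in T -> on_hyp p.1 p.2 x.

Definition is_flat (R : realType) (n : nat) (L : 'rV[R]_n -> Prop) : Prop :=
  exists T : {set 'I_n * 'I_n},
    (forall p, p \in T -> (p.1 <= p.2)%N) /\ (forall x, L x <-> flat_of T x).

Definition span_dim (R : realType) (n : nat) (L : 'rV[R]_n -> Prop) (k : nat)
  : Prop :=
  exists U : {vspace 'rV[R]_n},
    [/\ forall x, L x -> x \in U,
        forall V : {vspace 'rV[R]_n}, (forall x, L x -> x \in V) -> (U <= V)%VS
      & \dim U = k].

Definition is_kflat (R : realType) (n k : nat) (L : 'rV[R]_n -> Prop) : Prop :=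
  is_flat L /\ span_dim L k.

Definition vecv (R : realType) (n a b : nat) : 'rV[R]_n :=
  \row_(i < n) (if (i < a)%N then 1 else if (n - b <= i)%N then -1 else 0).

Definition level (P : nat * nat) : nat := (P.1 + P.2)%N.
Definition inE (n : nat) (P : nat * nat) : bool := (level P <= n)%N.
Definition inEstar (n : nat) (P : nat * nat) : bool := inE n P && (P != (0, 0)%N).

(* hat E_n = E_n + {oo}; [None] is oo, the maximum. *)
Definition inEhat (n : nat) (X : option (nat * nat)) : bool :=
  if X is Some P then inE n P else true.

Definition hle (X Y : option (nat * nat)) : bool :=
  match X, Y with
  | _, None => true
  | None, Some _ => false
  | Some P, Some Q => (P.1 <= Q.1)%N && (P.2 <= Q.2)%N
  end.

Definition shift11 (X : option (nat * nat)) : option (nat * nat) :=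
  if X is Some P then Some (P.1.+1, P.2.+1) else None.

(* S is an ensemble: S = (U_{0<=i<=m} [A_i, B_i]) /\ E_n^*, with (1)-(4). *)
Definition is_ensemble (n : nat) (S : nat * nat -> Prop) : Prop :=
  exists (m : nat) (A B : nat -> option (nat * nat)),
    (forall i, (i <= m)%N -> inEhat n (A i) && inEhat n (B i)) /\
    [/\ A 0%N = Some (0, 0)%N,
        forall i, (i <= m)%N -> hle (A i) (B i),
        forall i, (i < m)%N -> hle (shift11 (B i)) (A i.+1),
        (if B m is Some P then (level P < n)%N else true)
      & forall P, S P <->
          (inEstar n P /\
           exists2 i, (i <= m)%N & hle (A i) (Some P) && hle (Some P) (B i))].

Definition num_levels (S : nat * nat -> Prop) (k : nat) : Prop :=
  exists s : seq nat,
    [/\ uniq s, size s = k & forall l, l \in s <-> exists2 P, S P & level P = l].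

Definition is_k_ensemble (n k : nat) (S : nat * nat -> Prop) : Prop :=
  is_ensemble n S /\ num_levels S k.

(* Main.v *)
From HB Require Import structures.
From mathcomp Require Import all_boot all_order all_algebra zify ring lra.
From mathcomp Require Import reals.
Require Import Defs.
Set Implicit Arguments. Unset Strict Implicit. Unset Printing Implicit Defensive.

Definition pt := (nat * nat)%type.
Definition leP (P Q : pt) : bool := (P.1 <= Q.1) && (P.2 <= Q.2).
Definition meetP (P Q : pt) : pt := (minn P.1 Q.1, minn P.2 Q.2).
Definition joinP (P Q : pt) : pt := (maxn P.1 Q.1, maxn P.2 Q.2).
Definition add11 (P : pt) : pt := (P.1.+1, P.2.+1).
Definition inR (P : pt) (Rc : pt * pt) : bool := leP Rc.1 P && leP P Rc.2.
Definition cond (Q P : pt) : bool := (P.1 <= Q.1) == (P.2 <= Q.2).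
Definition splitR (Q : pt) (Rc : pt*pt) : seq (pt*pt) :=
  (if leP Rc.1 Q then [:: (Rc.1, meetP Rc.2 Q)] else [::]) ++
  (if leP (joinP Rc.1 (add11 Q)) Rc.2 then [:: (joinP Rc.1 (add11 Q), Rc.2)] else [::]).
Definition rlt (Rc Rc' : pt*pt) : bool := leP (add11 Rc.2) Rc'.1.
Definition build (n : nat) (Qs : seq pt) : seq (pt*pt) :=
  foldr (fun Q rs => flatten (map (splitR Q) rs)) [:: ((0,0),(n,n))] Qs.

Lemma condE Q P : cond Q P = leP P Q || leP (add11 Q) P.
Proof.
case: Q => p q; case: P => x y; rewrite /cond /leP /add11 /=.
by case: (leqP x p); case: (leqP y q).
Qed.

Lemma has_split P Q Rc : has (inR P) (splitR Q Rc) = inR P Rc && cond Q P.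
Proof.
rewrite condE.
case: Rc => [[a1 b1] [a2 b2]]; case: Q => p q; case: P => x y.
rewrite /splitR /inR /leP /meetP /joinP /add11 /=.
case: ifPn => g1; case: ifPn => g2; rewrite /= ?orbF ?andbF ?andbT;
apply/idP/idP => H; lia.
Qed.

Lemma piece_sub Q Rc Rc' : Rc' \in splitR Q Rc -> leP Rc.1 Rc'.1 && leP Rc'.2 Rc.2.
Proof.
case: Rc => [[a1 b1] [a2 b2]]; case: Q => p q.
rewrite /splitR mem_cat => /orP[]; case: ifPn => g; rewrite ?mem_seq1 ?in_nil // => /eqP -> /=;
  move: g; rewrite /leP /meetP /joinP /add11 /= => g; lia.
Qed.

Lemma all_flatten_map (T U : Type) (p : pred U) (f : T -> seq U) s :
  all p (flatten (map f s)) = all (fun x => all p (f x)) s.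
Proof. by elim: s => //= x s IH; rewrite all_cat IH. Qed.

Lemma has_flatten_map (T U : Type) (p : pred U) (f : T -> seq U) s :
  has p (flatten (map f s)) = has (fun x => has p (f x)) s.
Proof. by elim: s => //= x s IH; rewrite has_cat IH. Qed.

Lemma pairwise_flatten_map (T U : eqType) (rr : rel T) (r : rel U)
  (f : T -> seq U) s :
  (forall x y, x \in s -> y \in s -> rr x y -> {in f x & f y, forall x' y', r x' y'}) ->
  (forall x, x \in s -> pairwise r (f x)) -> pairwise rr s ->
  pairwise r (flatten (map f s)).
Proof.
elim: s => //= x s IH Hr Hf /andP[Hx Hs].
have Hr' : forall x y, x \in s -> y \in s -> rr x y -> {in f x & f y, forall x' y', r x' y'}.
  by move=> y z ys zs; apply: Hr; rewrite in_cons ?ys ?zs orbT.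
have Hf' : forall y, y \in s -> pairwise r (f y).
  by move=> y ys; apply: Hf; rewrite in_cons ys orbT.
rewrite pairwise_cat (Hf x (mem_head _ _)) (IH Hr' Hf' Hs) !andbT.
apply/allrelP => x' y' x'in /flatten_mapP[y ys y'in].
have yin : y \in x :: s by rewrite in_cons ys orbT.
exact: (Hr x y (mem_head _ _) yin (allP Hx y ys)).
Qed.

Definition goodR n (Rc : pt * pt) : bool :=
  leP Rc.1 Rc.2 && ((Rc.2.1 + Rc.2.2 < n) || (Rc.2 == (n,n))).

Lemma build_inv n Qs : all (fun Q : pt => Q.1 + Q.2 < n) Qs ->
  [/\ exists B0 rest, build n Qs = ((0,0),B0) :: rest,
      all (goodR n) (build n Qs),
      pairwise rlt (build n Qs) &
      forall P, leP P (n,n) -> all (cond^~ P) Qs = has (inR P) (build n Qs)].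
Proof.
elim: Qs => [|Q Qs IH] /=.
  split => //; first by exists (n,n), [::].
  - by rewrite /goodR /leP /= eqxx !orbT.
  - by move=> P HP; rewrite /= orbF /inR HP andbT.
move=> /andP[HQ /IH[[B0 [rest Hb]] Hg Hp Hm]].
set rs := build n Qs in Hb Hg Hp Hm *.
split.
- rewrite Hb /= /splitR /= /leP /=.
  by eexists; eexists.
- rewrite all_flatten_map; apply/allP => Rc /(allP Hg).
  case: Rc => [[a1 b1] [a2 b2]]; case: Q HQ => p q /= HQ.
  rewrite /goodR /splitR /leP /meetP /joinP /add11 /= => /andP[H1 H2].
  case: ifPn => g1; case: ifPn => g2; rewrite /= ?andbT; try (apply/andP; split);
  try (apply/andP; split); rewrite ?H2 ?orbT //; lia.
- apply: (pairwise_flatten_map _ _ Hp).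
  + move=> x y _ _ Hxy x' y' /piece_sub Hx /piece_sub Hy; move: Hxy Hx Hy.
    case: x => [[a1 b1] [a2 b2]]; case: y => [[c1 d1] [c2 d2]].
    case: x' => [[e1 f1] [e2 f2]]; case: y' => [[g1 h1] [g2 h2]].
    rewrite /rlt /leP /add11 /= => *; lia.
  + move=> x _; case: x => [[a1 b1] [a2 b2]]; case: Q HQ => p q /= HQ.
    rewrite /splitR /rlt /leP /meetP /joinP /add11 /=.
    by case: ifPn => g1; case: ifPn => g2 //=; rewrite ?andbT; lia.
- move=> P HP; rewrite Hm // has_flatten_map.
  rewrite (eq_has (fun Rc => has_split P Q Rc)); case: (cond Q P).
  + by apply: eq_has => x; rewrite andbT.
  + by apply/esym/hasP => -[x _]; rewrite andbF.
Qed.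
Lemma ensemble_ext n (S S' : pt -> Prop) :
  (forall P, S P <-> S' P) -> is_ensemble n S' -> is_ensemble n S.
Proof.
move=> HS [m [A [B [H1 [H2 H3 H4 H5 H6]]]]].
exists m, A, B; split=> //; split=> // P; rewrite HS; exact: H6.
Qed.

Section Ens.
Variables (n : nat) (rs : seq (pt * pt)).
Hypotheses (Hb : exists B0 rest, rs = ((0,0),B0) :: rest)
  (Hg : all (goodR n) rs) (Hp : pairwise rlt rs) (Hn : has (inR (n,n)) rs).

Let d : pt * pt := ((0,0),(0,0)).
Let l := (size rs).-1.

Lemma sz_gt0 : 0 < size rs.
Proof. by case: Hb => B0 [rest ->]. Qed.

Lemma l_lt : l < size rs.
Proof. by rewrite /l prednK // sz_gt0. Qed.

Lemma goodN i : i < size rs -> goodR n (nth d rs i).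
Proof. by move=> Hi; apply: (all_nthP d Hg). Qed.

Lemma rltN i j : i < j -> j < size rs -> rlt (nth d rs i) (nth d rs j).
Proof.
move=> Hij Hj; apply: (pairwiseP d Hp) => //; rewrite unfold_in /=; lia.
Qed.

Lemma leNN i : i < size rs -> leP (nth d rs i).2 (n,n).
Proof.
move/goodN; case: (nth d rs i) => A B; rewrite /goodR /leP /= => /andP[_ /orP[]].
  lia.
by move/eqP => ->; rewrite /= !leqnn.
Qed.

Lemma lastB : (nth d rs l).2 = (n,n).
Proof.
case/(has_nthP d): Hn => j Hj Hin.
have Bj : (nth d rs j).2 = (n,n).
  move: (goodN Hj) (leNN Hj) Hin; case: (nth d rs j) => A B.
  rewrite /goodR /inR /leP /= => /andP[_ /orP[H|/eqP//]] H2 /andP[_ H3]; lia.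
case: (ltngtP j l) => Hjl.
- have := rltN Hjl l_lt; have := goodN l_lt; have := leNN l_lt.
  move: Bj; case: (nth d rs j) => A B /= ->.
  case: (nth d rs l) => A' B'; rewrite /goodR /rlt /leP /add11 /= => *; lia.
- move: Hj; rewrite /l; lia.
- by rewrite -Hjl.
Qed.

Lemma levB i : i < l -> (nth d rs i).2.1 + (nth d rs i).2.2 < n.
Proof.
move=> Hil; have Hi : i < size rs by move: l_lt; lia.
have := rltN Hil l_lt; have := goodN l_lt; have := lastB; have := goodN Hi.
case: (nth d rs i) => A B; case: (nth d rs l) => A' B' /=.
rewrite /goodR /rlt /leP /add11 /= => /andP[_ /orP[//|/eqP ->]] -> /andP[H _] /=; move: H => /= H; lia.
Qed.

Lemma A0 : (nth d rs 0).1 = (0,0).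
Proof. by case: Hb => B0 [rest ->]. Qed.

Lemma ensemble_of : is_ensemble n (fun P => inEstar n P /\ has (inR P) rs).
Proof.
pose m := if (nth d rs l).1.1 + (nth d rs l).1.2 <= n then l else l.-1.
have Hml : m <= l by rewrite /m; case: ifP => _; lia.
have Hm1 : l.-1 <= m by rewrite /m; case: ifP => _; lia.
have Hm2 : ~~ ((nth d rs l).1.1 + (nth d rs l).1.2 <= n) -> 0 < l /\ m = l.-1.
  move=> H; split; last by rewrite /m (negbTE H).
  case: (posnP l) => // Hl0; move: H; rewrite Hl0 A0 /=; lia.
exists m, (fun i => Some (nth d rs i).1),
  (fun i => if i == l then None else Some (nth d rs i).2).
split; [|split].
- move=> i Him; rewrite /inEhat /inE /level /=.
  case: eqP => [Hil|/eqP Hil].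
    rewrite Hil andbT; case: (boolP (_ <= n)) => // Hc.
    have [Hl0 Hm] := Hm2 Hc; move: Him; rewrite Hm Hil; lia.
  have Hil' : i < l by lia.
  have := levB Hil'; have := goodN (leq_trans Hil' (ltnW l_lt)).
  case: (nth d rs i) => A B; rewrite /goodR /leP /= => /andP[/andP[H1 H2] _] H3.
  apply/andP; split; lia.
- by rewrite A0.
- move=> i Him; case: eqP => // _.
  have Hi : i < size rs by move: l_lt; lia.
  by move: (goodN Hi); case: (nth d rs i) => A B; rewrite /goodR => /andP[].
- move=> i Him; have Hil : i < l by lia.
  rewrite (ltn_eqF Hil) /=.
  by have := rltN (ltnSn i) (leq_ltn_trans Hil l_lt).
- case: (boolP ((nth d rs l).1.1 + (nth d rs l).1.2 <= n)) => Hc.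
    by rewrite /m Hc eqxx.
  have [Hl0 ->] := Hm2 Hc.
  have Hl1 : l.-1 < l by lia.
  by rewrite (ltn_eqF Hl1); apply: levB.
- move=> P; split => -[HE HP]; split=> //.
  + case/(has_nthP d): HP => i Hi HiP.
    have Hil : i <= l by move: Hi; rewrite /l; lia.
    exists i.
      case: (leqP i m) => // Hmi.
      have Heq : i = l by lia.
      case: (leqP ((nth d rs l).1.1 + (nth d rs l).1.2) n) => Hc.
        by move: Hmi; rewrite /m Hc; lia.
      move: HiP HE; rewrite Heq /inEstar /inE /level.
      case: (nth d rs l) Hc => A B /= Hc; rewrite /inR /leP /= => /andP[/andP[H1 H2] _] /andP[H3 _].
      lia.
    case: eqP => _; move: HiP; case: (nth d rs i) => A B;
      rewrite /inR /leP /= ?andbT => H; lia.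
  + case: HP => i Him Hin; apply/(has_nthP d); exists i; first by move: l_lt; lia.
    move: Hin; case: eqP => [Hil|_]; last by case: (nth d rs i) => A B.
    move: HE; rewrite /inEstar /inE /level.
    have := lastB; rewrite -Hil.
    case: (nth d rs i) => A B /= ->; rewrite /inR /leP /= andbT => /andP[H _] ->.
    apply/andP; split; lia.
Qed.

End Ens.

Definition chainR n (Rc : pt*pt) : seq pt :=
  let a1 := Rc.1.1 in let b1 := Rc.1.2 in let a2' := minn Rc.2.1 (n - b1) in
  [seq (a, b1) | a <- iota a1 (a2' - a1).+1] ++
  [seq (a2', b) | b <- iota b1.+1 (minn Rc.2.2 (n - a2') - b1)].

Definition ltP (P Q : pt) := leP P Q && (P.1 + P.2 < Q.1 + Q.2).

Lemma ch_mem n Rc Z : Z \in chainR n Rc ->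
  (exists2 a, Rc.1.1 <= a <= Rc.1.1 + (minn Rc.2.1 (n - Rc.1.2) - Rc.1.1) & Z = (a, Rc.1.2)) \/
  (exists2 b, Rc.1.2 < b <= Rc.1.2 + (minn Rc.2.2 (n - minn Rc.2.1 (n - Rc.1.2)) - Rc.1.2)
     & Z = (minn Rc.2.1 (n - Rc.1.2), b)).
Proof.
rewrite /chainR mem_cat => /orP[] /mapP[x]; rewrite mem_iota => Hx ->.
  by left; exists x => //; lia.
by right; exists x => //; lia.
Qed.

Lemma ch_in n Rc Z : leP Rc.1 Rc.2 -> Z \in chainR n Rc -> inR Z Rc.
Proof.
case: Rc => [[a1 b1] [a2 b2]]; rewrite /leP /inR /= => H /ch_mem /= [][x Hx ->];
  rewrite /leP /=; lia.
Qed.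

Lemma ch_inE n Rc Z : Z \in chainR n Rc -> Z.1 + Z.2 <= n -> Z.1 + Z.2 <= n.
Proof. by []. Qed.

Lemma pw_hv b1 a1 k c k' : (0 < k' -> a1 + k <= c.+1) ->
  pairwise ltP ([seq (a, b1) | a <- iota a1 k] ++ [seq (c, b) | b <- iota b1.+1 k']).
Proof.
move=> H; rewrite pairwise_cat !pairwise_map; apply/and3P; split.
- apply/allrelP => Z1 Z2 /mapP[x]; rewrite mem_iota => Hx -> /mapP[y]; rewrite mem_iota => Hy ->.
  rewrite /ltP /leP /=; have : 0 < k' by lia.
  move/H; lia.
- apply: (@sub_pairwise _ ltn); last by rewrite -sorted_pairwise ?iota_ltn_sorted //; exact: ltn_trans.
  move=> x y /= Hxy; rewrite /ltP /leP /=; lia.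
- apply: (@sub_pairwise _ ltn); last by rewrite -sorted_pairwise ?iota_ltn_sorted //; exact: ltn_trans.
  move=> x y /= Hxy; rewrite /ltP /leP /=; lia.
Qed.

Lemma ch_pairwise n Rc : leP Rc.1 Rc.2 -> pairwise ltP (chainR n Rc).
Proof.
move=> H; rewrite /chainR; apply: pw_hv => Hk; move: H; rewrite /leP => H; lia.
Qed.

Lemma ch_level n Rc P : leP Rc.1 Rc.2 -> inR P Rc -> P.1 + P.2 <= n ->
  exists2 Z, Z \in chainR n Rc & Z.1 + Z.2 = P.1 + P.2.
Proof.
case: Rc => [[a1 b1] [a2 b2]]; case: P => x y; rewrite /leP /inR /leP /= => H1 H2 H3.
have Ha : x <= minn a2 (n - b1) by lia.
case: (leqP (x + y) (minn a2 (n - b1) + b1)) => Hl.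
  exists (x + y - b1, b1); last by rewrite /=; lia.
  rewrite /chainR mem_cat; apply/orP; left; apply/mapP; exists (x + y - b1) => //.
  rewrite mem_iota /=; lia.
exists (minn a2 (n - b1), x + y - minn a2 (n - b1)); last by rewrite /=; lia.
rewrite /chainR mem_cat; apply/orP; right; apply/mapP; exists (x + y - minn a2 (n - b1)) => //.
rewrite mem_iota /=; lia.
Qed.

Import GRing.Theory Num.Theory.
Local Open Scope ring_scope.

Section Lin.
Variable R : realType.
Variable n : nat.
Local Notation v a b := (vecv R n a b).

Lemma vecvE a b (i : 'I_n) :
  v a b 0 i = if (i < a)%N then 1 else if (n - b <= i)%N then -1 else 0.
Proof. by rewrite mxE. Qed.

Ltac vsolve := apply/rowP => i; rewrite !mxE; have := ltn_ord i;
  repeat (case: ifPn => ?); move=> *; try (exfalso; lia); lra.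

Lemma D2 a a' b : (a + b.+1 <= n)%N -> (a' + b.+1 <= n)%N ->
  v a b.+1 - v a b = v a' b.+1 - v a' b.
Proof. move=> H1 H2; vsolve. Qed.

Lemma D3 a b b' : (a + b.+1 <= n)%N -> (b' <= b)%N ->
  v a b.+1 - v a b = v (n - b.+1) b' - v (n - b) b'.
Proof. move=> H1 H2; vsolve. Qed.

Lemma span_rect Rc (V : {vspace 'rV[R]_n}) : leP Rc.1 Rc.2 ->
  (forall Z, Z \in chainR n Rc -> (Z.1 + Z.2 <= n)%N -> v Z.1 Z.2 \in V) ->
  forall P, inR P Rc -> (P.1 + P.2 <= n)%N -> v P.1 P.2 \in V.
Proof.
case: Rc => [[a1 b1] [a2 b2]]; rewrite /leP /= => HR HV [a b]; rewrite /inR /leP /= => HP HPn.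
have H1 : forall x, (a1 <= x <= minn a2 (n - b1))%N -> v x b1 \in V.
  move=> x Hx; have := HV (x, b1); apply; last by rewrite /=; lia.
  rewrite /chainR mem_cat; apply/orP; left; apply/mapP; exists x => //.
  rewrite mem_iota /=; lia.
have H2 : forall y, (b1 < y <= minn b2 (n - minn a2 (n - b1)))%N ->
    v (minn a2 (n - b1)) y \in V.
  move=> y Hy; have := HV (minn a2 (n - b1), y); apply; last by rewrite /=; lia.
  rewrite /chainR mem_cat; apply/orP; right; apply/mapP; exists y => //.
  rewrite mem_iota /=; lia.
have : exists k, b = (b1 + k)%N by exists (b - b1)%N; lia.
case=> k Hk; elim: k b Hk HP HPn => [|k IH] b Hk HP HPn.
  rewrite /= Hk addn0; apply: H1; lia.
rewrite /= Hk addnS.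
have Hprev : v a (b1 + k)%N \in V by apply: IH => //; lia.
rewrite -(subrK (v a (b1 + k)%N) (v a (b1 + k).+1)); apply: memvD => //.
case: (leqP (b1 + k).+1 (minn b2 (n - minn a2 (n - b1)))) => Hb.
- rewrite (@D2 a (minn a2 (n - b1))); [|lia|lia].
  apply: memvB; first by apply: H2; lia.
  case: (posnP k) => Hk0.
    rewrite Hk0 addn0; apply: H1; lia.
  apply: H2; lia.
- rewrite (@D3 a (b1 + k) b1); [|lia|lia].
  apply: memvB; apply: H1; lia.
Qed.

Lemma span_entry0 (X : seq 'rV[R]_n) (i : 'I_n) :
  (forall x, x \in X -> x 0 i = 0) -> forall y, y \in <<X>>%VS -> y 0 i = 0.
Proof.
move=> H y Hy; have := @coord_span _ _ _ (in_tuple X) y Hy => ->.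
rewrite summxE big1 // => j _; rewrite mxE H ?mulr0 //.
by apply: mem_nth; exact: ltn_ord.
Qed.

Lemma coord_sep (P P2 : pt) : inEstar n P -> leP P2 P ->
  (P2.1 + P2.2 < P.1 + P.2)%N ->
  exists i : 'I_n, v P.1 P.2 0 i != 0 /\ forall Q, leP Q P2 -> v Q.1 Q.2 0 i = 0.
Proof.
case: P => a b; case: P2 => a' b'; rewrite /inEstar /inE /level /leP /= => /andP[Hn Hne] /andP[H1 H2] H3.
case: (ltnP a' a) => Hlt.
- have Hc : (a.-1 < n)%N by lia.
  exists (Ordinal Hc); split.
    rewrite vecvE /=; case: ifPn => ?; last (exfalso; lia).
    exact: oner_neq0.
  case=> c d; rewrite /leP /= => /andP[? ?]; rewrite vecvE /=.
  by repeat (case: ifPn => ?); try (exfalso; lia).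
- have Hc : (n - b < n)%N by lia.
  exists (Ordinal Hc); split.
    rewrite vecvE /=; case: ifPn => ?; first (exfalso; lia).
    case: ifPn => ?; last (exfalso; lia).
    by rewrite oppr_eq0 oner_eq0.
  case=> c d; rewrite /leP /= => /andP[? ?]; rewrite vecvE /=.
  by repeat (case: ifPn => ?); try (exfalso; lia).
Qed.

Lemma free_dec (D : seq pt) : all (inEstar n) D ->
  pairwise (fun x y => ltP y x) D -> free (map (fun P => v P.1 P.2) D).
Proof.
elim: D => [|P D IH] /=; first by rewrite /free span_nil dimv0.
move=> /andP[HP HD] /andP[Hall Hpw]; rewrite free_cons IH // andbT.
have Hle : forall Q, Q \in D -> leP Q (head (0,0)%N D).
  move=> Q; case: D Hall Hpw {IH HD} => [|Q' D] //= _ /andP[HQ' _].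
  rewrite in_cons => /orP[/eqP ->|HQ]; first by rewrite /leP !leqnn.
  by have := allP HQ' Q HQ; rewrite /ltP => /andP[].
have HP2 : leP (head (0,0)%N D) P &&
   ((head (0,0)%N D).1 + (head (0,0)%N D).2 < P.1 + P.2)%N.
  case: D Hall {IH HD Hpw Hle} => [|Q D] /=.
    move: HP; rewrite /inEstar /inE /level /leP; case: P => a b /= /andP[_ Hne] _.
    by case: a b Hne => [|a] [|b].
  by case/andP; rewrite /ltP.
case/andP: HP2 => HP2a HP2b.
have [i [Hi1 Hi2]] := coord_sep HP HP2a HP2b.
apply/negP => Hs; move/negP: Hi1; apply.
apply/eqP; apply: (span_entry0 _ Hs) => x /mapP[Q HQ ->].
exact: Hi2 (Hle Q HQ).
Qed.

Lemma pairwise_rev_flip (T : Type) (r : rel T) s :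
  pairwise r (rev s) = pairwise (fun x y => r y x) s.
Proof.
elim: s => //= x s IH; rewrite rev_cons -cats1 pairwise_cat IH /= andbT.
congr (_ && _).
by rewrite /allrel all_rev; apply: eq_all => y /=; rewrite andbT.
Qed.

Lemma free_inc (C : seq pt) : all (inEstar n) C ->
  pairwise ltP C -> free (map (fun P => v P.1 P.2) C).
Proof.
move=> HC Hp.
have Hperm : perm_eq (rev C) C by rewrite perm_rev perm_refl.
rewrite -(perm_free (perm_map (fun P => v P.1 P.2) Hperm)).
apply: free_dec; first by rewrite all_rev.
by rewrite pairwise_rev_flip.
Qed.
End Lin.

Section Layer.
Variable R : realType.
Variable n : nat.
Local Notation v a b := (vecv R n a b).

Lemma vecv_inW a b : (a + b <= n)%N -> inW (v a b).
Proof.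
move=> H i j Hij; rewrite !vecvE.
by repeat (case: ifPn => ?); try (exfalso; lia); lra.
Qed.

Lemma hyp_cond a b (i j : 'I_n) : (a + b <= n)%N -> (i <= j)%N ->
  on_hyp i j (v a b) <-> cond (nat_of_ord i, (n.-1 - j)%N) (a, b).
Proof.
move=> Hab Hij; rewrite /on_hyp /cond !vecvE /=.
have := ltn_ord i; have := ltn_ord j.
case: eqP => [<-|/eqP Hne] Hi Hj.
  case: (leqP a i) => H1; case: (leqP b (n.-1 - i)) => H2;
  repeat (case: ifPn => ?); try (exfalso; lia); split => H //; lra.
have Hlt : (i < j)%N by rewrite ltn_neqAle Hij andbT; exact: Hne.
case: (leqP a i) => H1; case: (leqP b (n.-1 - j)) => H2;
repeat (case: ifPn => ?); try (exfalso; lia); split => H //; lra.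
Qed.

Lemma thr_down (P : pred 'I_n) : (forall i j : 'I_n, (i <= j)%N -> P j -> P i) ->
  exists2 a, (a <= n)%N & forall i : 'I_n, P i = (i < a)%N.
Proof.
move=> HP.
have ex : exists c, [forall i : 'I_n, P i ==> (i < c)%N].
  by exists n; apply/forallP => i; rewrite ltn_ord implybT.
case: (ex_minnP ex) => a /forallP Ha Hmin.
exists a.
  apply: Hmin; apply/forallP => i; by rewrite ltn_ord implybT.
move=> i; apply/idP/idP => [Pi|Hia]; first exact: (implyP (Ha i)).
apply/negPn/negP => nPi.
have : (a <= i)%N.
  apply: Hmin; apply/forallP => j; apply/implyP => Pj.
  case: (ltnP j i) => // Hji.
  by move: nPi; rewrite (HP i j Hji Pj).
lia.
Qed.

Lemma thr_up (P : pred 'I_n) : (forall i j : 'I_n, (i <= j)%N -> P i -> P j) ->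
  exists2 b, (b <= n)%N & forall i : 'I_n, P i = (n - b <= i)%N.
Proof.
move=> HP.
have Hd : forall i j : 'I_n, (i <= j)%N -> P (rev_ord j) -> P (rev_ord i).
  move=> i j Hij; apply: HP; rewrite /=; have := ltn_ord j; lia.
have [b Hb Hb'] := thr_down Hd.
exists b => // i.
have := Hb' (rev_ord i); rewrite rev_ordK => ->; rewrite /=.
have := ltn_ord i; lia.
Qed.
End Layer.

Section Layer2.
Variable R : realType.
Variable n : nat.
Local Notation v a b := (vecv R n a b).

Lemma layer (T : {set 'I_n * 'I_n}) (V : {vspace 'rV[R]_n}) :
  (forall a b, inEstar n (a,b) -> flat_of T (v a b) -> v a b \in V) ->
  forall x, flat_of T x -> x \in V.
Proof.
move=> HV x.
move: {2}#|[set i | x 0 i != 0]| (leqnn #|[set i | x 0 i != 0]|) => N.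
elim: N x => [|N IH] x Hc Hx.
  have -> : x = 0; last by rewrite mem0v.
  move: Hc; rewrite leqn0 cards_eq0 => /eqP HS.
  apply/rowP => i; rewrite [RHS]mxE; apply/eqP/negPn/negP => Hi.
  have : i \in [set i | x 0 i != 0] by rewrite in_set.
  by rewrite HS in_set0.
case: (eqVneq x 0) => [->|Hx0]; first by rewrite mem0v.
case: (Hx) => HW Hh.
have Hd : forall i j : 'I_n, (i <= j)%N -> 0 < x 0 j -> 0 < x 0 i.
  by move=> i j Hij Hj; have := HW i j Hij; lra.
have Hu : forall i j : 'I_n, (i <= j)%N -> x 0 i < 0 -> x 0 j < 0.
  by move=> i j Hij Hj; have := HW i j Hij; lra.
have [a Ha HaE] := @thr_down n (fun i => 0 < x 0 i) Hd.
have [b Hb HbE] := @thr_up n (fun i => x 0 i < 0) Hu.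
have Hab : (a + b <= n)%N.
  case: (leqP (a + b) n) => // H.
  have Hi : (a.-1 < n)%N by lia.
  have E1 := HaE (Ordinal Hi); have E2 := HbE (Ordinal Hi); move: E1 E2 => /= E1 E2.
  have h1 : 0 < x 0 (Ordinal Hi) by rewrite E1; lia.
  have h2 : x 0 (Ordinal Hi) < 0 by rewrite E2; lia.
  lra.
have Hsg : forall i, v a b 0 i = (if 0 < x 0 i then 1 else if x 0 i < 0 then -1 else 0).
  by move=> i; rewrite vecvE HaE HbE.
have Hne : (a, b) != (0,0)%N.
  apply/negP => /eqP [Ea Eb]; move/eqP: Hx0; apply.
  apply/rowP => i; rewrite [RHS]mxE; move: (HaE i) (HbE i).
  rewrite Ea Eb subn0 ltn0 (leqNgt n i) ltn_ord /=.
  by case: ltrgtP.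
have [i0 Hi0] : exists i0, x 0 i0 != 0.
  case: (pickP (fun i => x 0 i != 0)) => [i Hi|Hall]; first by exists i.
  move/eqP: Hx0; case; apply/rowP => i; rewrite [RHS]mxE.
  by move: (Hall i) => /= /negbFE /eqP.
have [i1 Hi1 Hmin] := @Order.TotalTheory.arg_minP _ _ _ i0 (fun i => x 0 i != 0)
   (fun i => `|x 0 i|) Hi0.
set t := `|x 0 i1|.
have tpos : 0 < t by rewrite normr_gt0.
have Ht : forall j, (0 < x 0 j -> t <= x 0 j) /\ (x 0 j < 0 -> t <= - x 0 j).
  move=> j; split=> h.
  - by have := Hmin j (lt0r_neq0 h); rewrite (gtr0_norm h).
  - by have := Hmin j (ltr0_neq0 h); rewrite (ltr0_norm h).
set y := x - t *: v a b.
have yE : forall i, y 0 i = x 0 i - t * v a b 0 i by move=> i; rewrite !mxE.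
have Hvh : forall p, p \in T -> on_hyp p.1 p.2 (v a b).
  move=> p Hp; move: (Hh p Hp); rewrite /on_hyp !Hsg; case: eqP => _ H.
    by rewrite H Order.POrderTheory.ltxx.
  have E : x 0 p.2 = - x 0 p.1 by lra.
  rewrite E oppr_gt0 oppr_lt0.
  by case: (ltrgtP 0 (x 0 p.1)) => _; lra.
have Hy : flat_of T y.
  split.
  - move=> i j Hij; rewrite !yE !Hsg; have := HW i j Hij.
    move: (Ht i) (Ht j) => [Ti1 Ti2] [Tj1 Tj2].
    case: (ltrgtP 0 (x 0 i)) => hi; case: (ltrgtP 0 (x 0 j)) => hj;
    try have := Ti1 hi; try have := Ti2 hi; try have := Tj1 hj; try have := Tj2 hj;
    lra.
  - move=> p Hp; move: (Hh p Hp) (Hvh p Hp); rewrite /on_hyp !yE.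
    case: eqP => _ H1 H2; first by rewrite H1 H2 mulr0 subrr.
    by rewrite addrACA H1 -opprD -mulrDr H2 mulr0 oppr0 addr0.
have Hcard : (#|[set i | (y 0 i != 0)%R]| <= N)%N.
  have : [set i | y 0 i != 0] \proper [set i | x 0 i != 0].
    apply/properP; split.
      apply/subsetP => i; rewrite !in_set yE Hsg; apply: contraNN => /eqP H.
      by rewrite H Order.POrderTheory.ltxx mulr0 subrr.
    exists i1; rewrite !in_set ?Hi1 // negbK yE Hsg /t.
    case: (ltrgtP 0 (x 0 i1)) => h.
    - by rewrite (gtr0_norm h) mulr1 subrr.
    - by rewrite (ltr0_norm h) mulrN1 opprK subrr.
    - by move: Hi1; rewrite -h eqxx.
  move/proper_card; lia.
have Hvin : v a b \in V.
  apply: HV; first by rewrite /inEstar /inE /level /= Hab Hne.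
  split; [exact: vecv_inW | exact: Hvh].
have -> : x = y + t *: v a b by rewrite /y subrK.
apply: memvD; [exact: IH | exact: memvZ].
Qed.
End Layer2.

Definition qpt n (p : 'I_n * 'I_n) : pt := (nat_of_ord p.1, (n.-1 - p.2)%N).

Lemma vecv00 (R : realType) n : vecv R n 0 0 = 0.
Proof.
apply/rowP => i; rewrite !mxE /= subn0 (leqNgt n i) ltn_ord //.
Qed.

Close Scope ring_scope.
Unset Implicit Arguments.

Theorem lemma5p1 (R : realType) (n k : nat) (L : 'rV[R]_n -> Prop) :
  is_kflat k L ->
  is_k_ensemble n k (fun P => inEstar n P /\ L (vecv R n P.1 P.2)).
Proof.
case=> [[T [HT HL]] [U [HU1 HU2 HU3]]].
pose Qs := map (@qpt n) (enum T).
have HQs : all (fun Q : pt => (Q.1 + Q.2 < n)%N) Qs.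
  apply/allP => Q /mapP[p Hp ->]; rewrite mem_enum in Hp.
  have := HT p Hp; have := ltn_ord p.2; rewrite /qpt /=; lia.
have [Hb Hg Hp Hm] := build_inv HQs.
set rs := build n Qs in Hb Hg Hp Hm.
have Hn : has (inR (n,n)) rs.
  rewrite -Hm; last by rewrite /leP !leqnn.
  apply/allP => Q HQ; have := allP HQs Q HQ; case: Q {HQ} => q1 q2 /= h.
  rewrite /cond /= (leqNgt n q1) (leqNgt n q2).
  have -> : (q1 < n)%N by lia.
  have -> : (q2 < n)%N by lia.
  by [].
have HS : forall P, inEstar n P -> L (vecv R n P.1 P.2) <-> has (inR P) rs.
  move=> [a b] HP; have Hab : (a + b <= n)%N.
    by move: HP; rewrite /inEstar /inE /level => /andP[].
  rewrite HL -Hm /=; last by rewrite /leP /=; apply/andP; split; lia.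
  split.
  - case=> _ Hh; apply/allP => Q /mapP[p Hp0 ->]; rewrite mem_enum in Hp0.
    by apply/(@hyp_cond R n a b p.1 p.2 Hab (HT p Hp0)); apply: Hh.
  - move/allP => Hall; split; first exact: vecv_inW.
    move=> p Hp0; apply/(@hyp_cond R n a b p.1 p.2 Hab (HT p Hp0)).
    by apply: Hall; apply/mapP; exists p => //; rewrite mem_enum.
split.
  apply: (@ensemble_ext n _ (fun P => inEstar n P /\ has (inR P) rs)).
    by move=> P; split => -[HP H]; split => //; [rewrite -HS | rewrite HS].
  exact: ensemble_of Hb Hg Hp Hn.
pose C := [seq Z <- flatten (map (chainR n) rs) | inEstar n Z && has (inR Z) rs].
have gR : forall Rc, Rc \in rs -> leP Rc.1 Rc.2.
  by move=> Rc HRc; have := allP Hg Rc HRc; rewrite /goodR => /andP[].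
have HCpw : pairwise ltP C.
  apply: pairwise_filter; apply: (pairwise_flatten_map (rr := rlt)) => //.
  - move=> R1 R2 H1 H2 Hr Z1 Z2 Hz1 Hz2.
    have := ch_in (gR _ H1) Hz1; have := ch_in (gR _ H2) Hz2.
    move: Hr; rewrite /rlt /inR /ltP /leP /add11 /= => *; lia.
  - by move=> Rc HRc; apply: ch_pairwise; apply: gR.
have HCS : forall Z, Z \in C -> inEstar n Z /\ has (inR Z) rs.
  by move=> Z; rewrite mem_filter => /andP[/andP[]].
have HCin : forall Rc Z, Rc \in rs -> Z \in chainR n Rc -> inEstar n Z -> Z \in C.
  move=> Rc Z HRc HZ HE; rewrite mem_filter HE /=; apply/andP; split.
    by apply/hasP; exists Rc => //; exact: (ch_in (gR _ HRc) HZ).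
  by apply/flatten_mapP; exists Rc.
have HClev : forall P, inEstar n P -> has (inR P) rs ->
    exists2 Z, Z \in C & level Z = level P.
  move=> P HP /hasP[Rc HRc Hin].
  have HPn : (P.1 + P.2 <= n)%N by move: HP; rewrite /inEstar /inE /level => /andP[].
  have [Z HZ HZl] := ch_level (gR _ HRc) Hin HPn.
  exists Z; last by rewrite /level HZl.
  apply: (HCin Rc) => //.
  move: HP; rewrite /inEstar /inE /level HZl => /andP[-> HP0] /=.
  have HP1 : (0 < P.1 + P.2)%N.
    by move: HP0 {Hin HPn HZl}; case: P => [[|a] [|b]].
  apply/eqP => HZ0; move: HZl; rewrite HZ0 /=; lia.
have Hspan : forall x, L x -> x \in <<map (fun P => vecv R n P.1 P.2) C>>%VS.
  move=> x /HL; apply: layer => a b HE Hf.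
  have : has (inR (a,b)) rs by rewrite -(HS (a,b)) // HL.
  case/hasP => Rc HRc Hin.
  have HEn : (a + b <= n)%N by move: HE; rewrite /inEstar /inE /level => /andP[].
  apply: (@span_rect R n Rc _ (gR _ HRc) _ (a,b) Hin HEn).
  move=> Z HZ HZn; case: (eqVneq Z (0,0)%N) => [->|Hz].
    by rewrite /= vecv00 mem0v.
  apply: memv_span; apply: map_f; apply: (HCin Rc) => //.
  by rewrite /inEstar /inE /level HZn Hz.
have HCL : forall Z, Z \in C -> L (vecv R n Z.1 Z.2).
  by move=> Z /HCS[HE HZ]; rewrite HS.
have HUeq : U = <<map (fun P => vecv R n P.1 P.2) C>>%VS.
  apply/eqP; rewrite eqEsubv; apply/andP; split.
  - by apply: HU2 => x Hx; exact: Hspan.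
  - by apply/span_subvP => y /mapP[Z HZ ->]; apply: HU1; exact: HCL.
have HCall : all (inEstar n) C by apply/allP => Z /HCS[].
have Hfree := free_inc R HCall HCpw.
have Hk : k = size C.
  by rewrite -HU3 HUeq; move: Hfree; rewrite /free => /eqP ->; rewrite size_map.
exists (map level C); split.
- apply: (@pairwise_uniq _ ltn); first exact: ltnn.
  rewrite pairwise_map; apply: sub_pairwise HCpw => x y.
  by rewrite /ltP /level /= => /andP[].
- by rewrite size_map Hk.
- move=> l; split.
  + move=> /mapP[Z HZ ->]; exists Z => //; split; [exact: (HCS Z HZ).1 | exact: HCL].
  + case=> P [HP HL'] <-.
    have [Z HZ HZl] := HClev P HP (proj1 (HS P HP) HL').
    by rewrite -HZl; apply: map_f.
Qed.
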